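(* Let $v\ge4$ be an integer with $v\not\equiv 2\pmod 4$. Then an optimum $(d,2)$-CDA$((d+1)v^2;6,v)$ exists for every positive integer $d$ with $d+1\le v$.
   Context: Consecutive $t$-way interaction in an $N\times k$ array $A=(a_{ij})$ over a $v$-set $V$: $T=\{(i,x_i),\dots,(i+t-1,x_{i+t-1})\}$, $1\le i\le k-t+1$, $x_r\in V$; $\rho(A,T)=\{r: a_{r,j}=x_j\ \forall (j,x_j)\in T\}$, $\rho(A,\mathcal T)=\bigcup_{T\in\mathcal T}\rho(A,T)$. A $(d,t)$-CDA$(N;k,v)$ is an $N\times k$ array over $V$ in which every $t$ consecutive columns contain every $t$-tuple at least once, and such that for every set $\mathcal T$ of exactly $d$ distinct consecutive $t$-way interactions and every consecutive $t$-way interaction $T$: $\rho(A,T)\subseteq\rho(A,\mathcal T)$ iff $T\in\mathcal T$. It is optimum if $N=(d+1)v^t$. *)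

(* Defs.v *)
From HB Require Import structures.
From mathcomp Require Import all_boot all_order all_algebra.
Set Implicit Arguments. Unset Strict Implicit. Unset Printing Implicit Defensive.

(* A consecutive t-way interaction: a starting column i (0 <= i <= k-t)
   together with the values x_0..x_{t-1} required in columns i..i+t-1. *)
Definition interaction (k t v : nat) : finType :=
  ('I_(k - t + 1) * {ffun 'I_t -> 'I_v})%type.

Definition rho (N k v t : nat) (A : 'M['I_v]_(N, k)) (T : interaction k t v)
  : {set 'I_N} :=
  [set r : 'I_N | [forall j : 'I_t,
     match (insub (T.1 + j)%N : option 'I_k) with
     | Some c => A r c == T.2 j
     | None => false
     end]].

Definition rhoS (N k v t : nat) (A : 'M['I_v]_(N, k))
  (S : {set interaction k t v}) : {set 'I_N} :=
  \bigcup_(T in S) rho A T.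

Definition isCDA (d t N k v : nat) (A : 'M['I_v]_(N, k)) : Prop :=
  (forall T : interaction k t v, rho A T != set0) /\
  (forall (S : {set interaction k t v}) (T : interaction k t v),
      #|S| = d -> (rho A T \subset rhoS A S) = (T \in S)).

Definition isOptimumCDA (d t N k v : nat) (A : 'M['I_v]_(N, k)) : Prop :=
  isCDA d t A /\ N = (d + 1) * v ^ t.

(* Main.v *)
Require Import Defs.
From HB Require Import structures.
From mathcomp Require Import all_boot all_order all_algebra.
From mathcomp Require Import zify ring.
Import GRing.Theory.

Definition goodT (V : finType) : Prop :=
  exists (P : finType) (c : nat -> P -> V) (psi : P -> V),
  #|P| = #|V| ^ 3 /\
  (forall i, i < 5 -> injective (fun p => (c i p, c i.+1 p, psi p))) /\
  (forall i j, i < j -> j < 5 ->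
     injective (fun p => (c i p, c i.+1 p, c j p, c j.+1 p))).

Lemma forall2E (Q : 'I_2 -> bool) : [forall j, Q j] = Q ord0 && Q ord_max.
Proof.
apply/forallP/andP => [H|[H0 H1] [[|[|j]] hj]]; first by split; apply: H.
- by have -> : Ordinal hj = ord0 by apply: val_inj.
- by have -> : Ordinal hj = ord_max by apply: val_inj.
- by [].
Qed.

Lemma cda_of_good v d : d + 1 <= v -> goodT 'I_v ->
  exists A : 'M['I_v]_((d + 1) * v ^ 2, 6), isOptimumCDA d 2 A.
Proof.
move=> hdv [P [c [psi [hP [h1 h2]]]]].
pose D := [set widen_ord hdv i | i in 'I_(d+1)].
have cD : #|D| = d+1 by rewrite card_imset ?card_ord //; by move=> a b /(congr1 val) /= /val_inj.
pose R := [set p | psi p \in D].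
have onto : forall i, i < 5 -> forall t : 'I_v * 'I_v * 'I_v,
    exists p, (c i p, c i.+1 p, psi p) = t.
  move=> i hi t.
  have hc : #|{: 'I_v * 'I_v * 'I_v}| <= #|P|.
    by rewrite hP !card_prod card_ord !expnS expn0 muln1 mulnA.
  by case/codomP: (inj_card_onto (h1 i hi) hc t) => p ->; exists p.
have hR : #|R| = (d+1) * v^2.
  pose g := fun p => (c 0 p, c 1 p, psi p).
  have -> : #|R| = #|g @: R| by rewrite card_imset //; exact: h1.
  have -> : g @: R = setX (setX [set: 'I_v] [set: 'I_v]) D.
    apply/setP => t; apply/imsetP/idP.
    - move=> [p]; rewrite inE => hp ->; by rewrite /g !inE /=.
    - rewrite !inE => /andP[_ ht].
      have [p hp] := onto 0 isT t. exists p => //.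
      by rewrite inE; move: ht; rewrite -hp.
  by rewrite !cardsX !cardsT card_ord cD expnS expn1 mulnC.
pose N := ((d+1) * v^2)%N.
pose rowp (r : 'I_N) : P := enum_val (A := mem R) (cast_ord (esym hR) r).
have rowpR r : rowp r \in R by apply: enum_valP.
have rowp_inj : injective rowp.
  by move=> r r' /enum_val_inj /cast_ord_inj.
have rowp_onto p : p \in R -> exists r, rowp r = p.
  move=> hp; exists (cast_ord hR (enum_rank_in hp p)).
  by rewrite /rowp cast_ordK enum_rankK_in.
pose A : 'M['I_v]_((d + 1) * v ^ 2, 6) := (\matrix_(r, k) c k (rowp r))%R.
exists A; split; last by [].
have key : forall (i : 'I_5) (j : 'I_2) r x,
   (match (insub (i + j)%N : option 'I_6) with
    | Some c0 => A r c0 == x | None => false end) = (c (i + j) (rowp r) == x).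
  move=> i j r x; case: insubP => [k _ hk | hn]; first by rewrite mxE hk.
  exfalso; move/negP: hn; have := ltn_ord i; have := ltn_ord j; lia.
have mem_rho : forall (T : interaction 6 2 v) r, (r \in rho A T) =
    (c T.1 (rowp r) == T.2 ord0) && (c T.1.+1 (rowp r) == T.2 ord_max).
  move=> [i f] r; rewrite inE forall2E !key /=.
  by rewrite addn0 addn1.
have rhoGe : forall T : interaction 6 2 v, d + 1 <= #|rho A T|.
  move=> [i f].
  pose F := [set p in R | (c i p == f ord0) && (c i.+1 p == f ord_max)].
  have eF : rowp @: rho A (i,f) = F.
    apply/setP=> p; apply/imsetP/idP.
    - move=> [r]; rewrite mem_rho /= => hr ->; by rewrite inE rowpR hr.
    - rewrite inE => /andP[hp hq]; have [r er] := rowp_onto p hp.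
      by exists r => //; rewrite mem_rho /= er.
  rewrite -(card_imset _ rowp_inj) eF -cD.
  have sub : D \subset psi @: F.
    apply/subsetP => s hs.
    have [p hp] := onto i (ltn_ord i) (f ord0, f ord_max, s).
    apply/imsetP; exists p; last by case: hp.
    case: hp => e1 e2 e3.
    by rewrite !inE e1 e2 e3 hs !eqxx.
  exact: leq_trans (subset_leq_card sub) (leq_imset_card _ _).
have uniq_rows : forall (T T' : interaction 6 2 v) r r', T != T' -> r \in rho A T -> r' \in rho A T ->
    r \in rho A T' -> r' \in rho A T' -> r = r'.
  move=> [i f] [i' f'] r r' hne; rewrite !mem_rho /=.
  move=> /andP[/eqP a1 /eqP a2] /andP[/eqP b1 /eqP b2].
  move=> /andP[/eqP a3 /eqP a4] /andP[/eqP b3 /eqP b4].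
  case: (ltngtP i i') => hii.
  - apply: rowp_inj; apply: (h2 i i' hii (ltn_ord i')) => /=.
    by rewrite a1 a2 a3 a4 b1 b2 b3 b4.
  - apply: rowp_inj; apply: (h2 i' i hii (ltn_ord i)) => /=.
    by rewrite a1 a2 a3 a4 b1 b2 b3 b4.
  - exfalso; move: hne.
    have ei : i = i' by apply: val_inj.
    have ef : f = f'.
      apply/ffunP => j; have [-> | ->] : j = ord0 \/ j = ord_max.
        by case: j => [[|[|j]] hj]; [left|right|]; try apply: val_inj.
      + by rewrite -a1 -a3 ei.
      + by rewrite -a2 -a4 ei.
    by rewrite ei ef eqxx.
split.
  by move=> T; rewrite -card_gt0 (leq_trans _ (rhoGe T)) // addn1.
move=> S T hS; case: (boolP (T \in S)) => hT.
  by apply/idP; rewrite /rhoS; exact: (bigcup_sup T hT).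
apply/negP => hsub.
pose h r := odflt T [pick T' in S | r \in rho A T'].
have hh : forall r, r \in rho A T -> (h r \in S) && (r \in rho A (h r)).
  move=> r hr; have := subsetP hsub r hr; case/bigcupP => T' hT' hrT'.
  rewrite /h; case: pickP => [T'' /andP[k1 k2] | hn] /=; first by rewrite k1 k2.
  by move: (hn T'); rewrite hT' hrT'.
have : #|rho A T| <= #|S|.
  rewrite -(card_in_imset (f:=h)).
    apply: subset_leq_card; apply/subsetP => _ /imsetP[r hr ->].
    by case/andP: (hh r hr).
  move=> r r' hr hr' e.
  have /andP[hS1 hr1] := hh r hr; have /andP[hS2 hr2] := hh r' hr'.
  apply: (uniq_rows T (h r)) => //; last by rewrite e.
  by apply/eqP => et; move: hT; rewrite et hS1.
rewrite hS => ?; have := rhoGe T; lia.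
Qed.


Lemma good_prod (V1 V2 : finType) : goodT V1 -> goodT V2 -> goodT (V1 * V2)%type.
Proof.
move=> [P1 [c1 [s1 [hP1 [a1 b1]]]]] [P2 [c2 [s2 [hP2 [a2 b2]]]]].
exists (P1 * P2)%type, (fun k p => (c1 k p.1, c2 k p.2)), (fun p => (s1 p.1, s2 p.2)).
split; first by rewrite !card_prod hP1 hP2 expnMn.
split.
  move=> i hi [p1 p2] [q1 q2] /= [e1 e2 e3 e4 e5 e6].
  have -> : p1 = q1 by apply: (a1 i hi); rewrite /= e1 e3 e5.
  by have -> : p2 = q2 by apply: (a2 i hi); rewrite /= e2 e4 e6.
move=> i j hij hj [p1 p2] [q1 q2] /= [e1 e2 e3 e4 e5 e6 e7 e8].
have -> : p1 = q1 by apply: (b1 i j hij hj); rewrite /= e1 e3 e5 e7.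
by have -> : p2 = q2 by apply: (b2 i j hij hj); rewrite /= e2 e4 e6 e8.
Qed.

Lemma good_transport (V W : finType) : goodT V -> #|V| = #|W| -> goodT W.
Proof.
move=> [P [c [s [hP [a b]]]]] hVW.
pose f (x : V) : W := enum_val (cast_ord hVW (enum_rank x)).
have finj : injective f by move=> x y /enum_val_inj /cast_ord_inj /enum_rank_inj.
exists P, (fun k p => f (c k p)), (fun p => f (s p)).
split; first by rewrite hP hVW.
split.
  move=> i hi p q /= [e1 e2 e3]; apply: (a i hi).
  by rewrite /= (finj _ _ e1) (finj _ _ e2) (finj _ _ e3).
move=> i j hij hj p q /= [e1 e2 e3 e4]; apply: (b i j hij hj).
by rewrite /= (finj _ _ e1) (finj _ _ e2) (finj _ _ e3) (finj _ _ e4).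
Qed.

Arguments good_transport {V W}.
Arguments good_prod {V1 V2}.

Lemma inj_of_uniq (T U : eqType) (f : T -> U) (l : seq T) :
  (forall x, x \in l) -> uniq (map f l) -> injective f.
Proof.
move=> hl hu x y e.
have : {in l &, injective f}.
  elim: l hu {hl} => [//|a l IH] /= /andP[ha hu] u w.
  rewrite !inE => /orP[/eqP->|hu'] /orP[/eqP->|hw'] // euw.
  - by move: ha; rewrite euw map_f.
  - by move: ha; rewrite -euw map_f.
  - exact: IH.
by move/(_ x y (hl x) (hl y) e).
Qed.

Arguments inj_of_uniq {T U f l}.
Definition lb := [:: true; false].
Definition V4 := (bool * bool)%type.
Definition add4 (a b : V4) : V4 := (a.1 (+) b.1, a.2 (+) b.2).
Definition lam4 (a : V4) : V4 := (a.2, a.1 (+) a.2).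
Definition P4 := (V4 * V4 * V4)%type.
Definition c4 (k : nat) (p : P4) : V4 := let: (x,y,z) := p in
  match k with 0 => x | 1 => y | 2 => z | 3 => add4 x z | 4 => add4 x y
  | _ => add4 z (lam4 x) end.
Definition psi4 (p : P4) : V4 := let: (x,y,z) := p in add4 x (add4 y z).
Definition lv4 : seq V4 := [seq (x, y) | x <- lb, y <- lb].
Definition lp4 : seq P4 := [seq (xy, z) | xy <- [seq (x,y) | x <- lv4, y <- lv4], z <- lv4].
Lemma lbP b : b \in lb. Proof. by case: b. Qed.
Lemma lv4P x : x \in lv4.
Proof. by case: x => a b; apply: allpairs_f; apply: lbP. Qed.
Lemma lp4P x : x \in lp4.
Proof.
case: x => [[x y] z]; apply: allpairs_f; last exact: lv4P.
by apply: allpairs_f; apply: lv4P.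
Qed.

Lemma good4 : goodT V4.
Proof.
exists P4, c4, psi4; split; first by rewrite !card_prod card_bool.
split.
  move=> i; case: i => [|[|[|[|[|i]]]]] // _; apply: (inj_of_uniq lp4P);
  vm_compute; reflexivity.
move=> i j; case: j => [|[|[|[|[|j]]]]]; case: i => [|[|[|[|[|i]]]]] //= _ _;
  apply: (inj_of_uniq lp4P); vm_compute; reflexivity.
Qed.

Definition V8 := (bool * bool * bool)%type.
Definition add8 (a b : V8) : V8 := (a.1.1 (+) b.1.1, a.1.2 (+) b.1.2, a.2 (+) b.2).
Definition lam8 (a : V8) : V8 := let: (x,y,z) := a in (z, x (+) z, y).
Definition P8 := (V8 * V8 * V8)%type.
Definition c8 (k : nat) (p : P8) : V8 := let: (x,y,z) := p in
  match k with 0 => x | 1 => y | 2 => z | 3 => add8 x z | 4 => add8 x y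
  | _ => add8 z (lam8 x) end.
Definition psi8 (p : P8) : V8 := let: (x,y,z) := p in add8 x (add8 y z).
Definition lv8 : seq V8 := [seq (xy, z) | xy <- [seq (x,y) | x <- lb, y <- lb], z <- lb].
Definition lp8 : seq P8 := [seq (xy, z) | xy <- [seq (x,y) | x <- lv8, y <- lv8], z <- lv8].
Lemma lv8P x : x \in lv8.
Proof.
case: x => [[a b] c]; apply: allpairs_f; last exact: lbP.
by apply: allpairs_f; apply: lbP.
Qed.
Lemma lp8P x : x \in lp8.
Proof.
case: x => [[x y] z]; apply: allpairs_f; last exact: lv8P.
by apply: allpairs_f; apply: lv8P.
Qed.

Lemma good8 : goodT V8.
Proof.
exists P8, c8, psi8; split; first by rewrite !card_prod card_bool.
split.
  move=> i; case: i => [|[|[|[|[|i]]]]] // _; apply: (inj_of_uniq lp8P);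
  vm_compute; reflexivity.
move=> i j; case: j => [|[|[|[|[|j]]]]]; case: i => [|[|[|[|[|i]]]]] //= _ _;
  apply: (inj_of_uniq lp8P); vm_compute; reflexivity.
Qed.


Definition cZ (R : zmodType) (k : nat) (p : R * R * R) : R :=
  let: (x,y,z) := p in
  match k with 0 => x | 1 => y | 2 => z | 3 => (x + z)%R | 4 => (x + y)%R
  | _ => (z + x *+ 2)%R end.
Definition psiZ (R : zmodType) (p : R * R * R) : R :=
  let: (x,y,z) := p in (x + y + z)%R.

Lemma good_odd v : 1 < v -> odd v -> goodT 'Z_v.
Proof.
move=> hv hodd.
pose i2 : 'Z_v := ((((v + 1) %/ 2)%N)%:R)%R.
have h2 : (2%:R * i2 = 1 :> 'Z_v)%R.
  rewrite /i2 -natrM (_ : (2 * ((v + 1) %/ 2) = v + 1)%N).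
    by rewrite natrD pchar_Zp // add0r.
  have : (v %% 2 = 1)%N by rewrite modn2 hodd.
  lia.
have hx : forall x y z : 'Z_v,
    (((z + x *+ 2) - (x + y + z) + (x + y)) * i2 = x)%R.
  move=> x y z.
  rewrite (_ : ((z + x *+ 2) - (x + y + z) + (x + y) = x * 2%:R)%R); last by ring.
  by rewrite -mulrA h2 mulr1.
exists ('Z_v * 'Z_v * 'Z_v)%type, (@cZ 'Z_v), (@psiZ 'Z_v).
split; first by rewrite !card_prod !expnS expn0 muln1 mulnA.
split.
  move=> i; case: i => [|[|[|[|[|i]]]]] // _.
  - apply: (@can_inj _ _ _ (fun t => (t.1.1, t.1.2, t.2 - t.1.1 - t.1.2)%R)).
    by move=> [[x y] z] /=; congr (_,_,_); ring.
  - apply: (@can_inj _ _ _ (fun t => (t.2 - t.1.1 - t.1.2, t.1.1, t.1.2)%R)).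
    by move=> [[x y] z] /=; congr (_,_,_); ring.
  - apply: (@can_inj _ _ _ (fun t => (t.1.2 - t.1.1, t.2 - t.1.2, t.1.1)%R)).
    by move=> [[x y] z] /=; congr (_,_,_); ring.
  - apply: (@can_inj _ _ _ (fun t => (t.1.1 + t.1.2 - t.2, t.2 - t.1.1, t.2 - t.1.2)%R)).
    by move=> [[x y] z] /=; congr (_,_,_); ring.
  - apply: (@can_inj _ _ _ (fun t =>
      let x := ((t.1.2 - t.2 + t.1.1) * i2)%R in (x, t.1.1 - x, t.2 - t.1.1)%R)).
    by move=> [[x y] z] /=; rewrite hx; congr (_,_,_); ring.
move=> i j; case: j => [|[|[|[|[|j]]]]]; case: i => [|[|[|[|[|i]]]]] //= _ _.
- apply: (@can_inj _ _ _ (fun t => (t.1.1.1, t.1.1.2, t.2)%R)).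
  by move=> [[x y] z] /=.
- apply: (@can_inj _ _ _ (fun t => (t.1.1.1, t.1.1.2, t.1.2)%R)).
  by move=> [[x y] z] /=.
- apply: (@can_inj _ _ _ (fun t => (t.2 - t.1.1.2, t.1.1.1, t.1.1.2)%R)).
  by move=> [[x y] z] /=; congr (_,_,_); ring.
- apply: (@can_inj _ _ _ (fun t => (t.1.1.1, t.1.1.2, t.1.2 - t.1.1.1)%R)).
  by move=> [[x y] z] /=; congr (_,_,_); ring.
- apply: (@can_inj _ _ _ (fun t => (t.1.2 - t.1.1.2, t.1.1.1, t.1.1.2)%R)).
  by move=> [[x y] z] /=; congr (_,_,_); ring.
- apply: (@can_inj _ _ _ (fun t => (t.1.1.2 - t.1.1.1, t.2 - t.1.1.2 + t.1.1.1, t.1.1.1)%R)).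
  by move=> [[x y] z] /=; congr (_,_,_); ring.
- apply: (@can_inj _ _ _ (fun t => (t.1.1.1, t.1.1.2, t.2 - t.1.1.1 *+ 2)%R)).
  by move=> [[x y] z] /=; congr (_,_,_); ring.
- apply: (@can_inj _ _ _ (fun t => (t.1.2 - t.1.1.1, t.1.1.1, t.1.1.2)%R)).
  by move=> [[x y] z] /=; congr (_,_,_); ring.
- apply: (@can_inj _ _ _ (fun t => (t.1.1.2 - t.1.1.1, t.1.2 - t.1.1.2 + t.1.1.1, t.1.1.1)%R)).
  by move=> [[x y] z] /=; congr (_,_,_); ring.
- apply: (@can_inj _ _ _ (fun t => (t.2 - t.1.1.1, t.1.1.2 - t.2 + t.1.1.1, t.1.1.1 *+ 2 - t.2)%R)).
  by move=> [[x y] z] /=; congr (_,_,_); ring.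
Qed.

Lemma good_nat v : 1 < v -> odd v || (4 %| v) -> goodT 'I_v.
Proof.
elim/ltn_ind: v => v IH hv /orP[hodd|h4].
  apply: (good_transport (@good_odd v hv hodd)).
  by rewrite !card_ord Zp_cast.
have e4 : v = (4 * (v %/ 4))%N by move: h4; lia.
set w := v %/ 4 in e4.
have w0 : 0 < w by lia.
case: (boolP (odd w)) => hw.
  case: (ltngtP 1 w) => hw1; last first; [| lia |].
  - apply: (good_transport good4); rewrite card_ord e4 -hw1.
    by rewrite card_prod card_bool.
  - have gw := IH w ltac:(lia) hw1 (introT orP (or_introl hw)).
    apply: (good_transport (good_prod good4 gw)).
    by rewrite card_ord card_prod card_ord !card_prod card_bool.
have ew : w = (2 * (w %/ 2))%N.
  have : (w %% 2 = 0)%N by rewrite modn2 (negbTE hw).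
  lia.
set u := w %/ 2 in ew.
case: (boolP (odd u)) => hu.
  case: (ltngtP 1 u) => hu1; last first; [| lia |].
  - apply: (good_transport good8); rewrite card_ord e4 ew -hu1.
    by rewrite !card_prod card_bool.
  - have gu := IH u ltac:(lia) hu1 (introT orP (or_introl hu)).
    apply: (good_transport (good_prod good8 gu)).
    rewrite card_ord card_prod card_ord !card_prod card_bool e4 ew; lia.
have eu : u = (2 * (u %/ 2))%N.
  have : (u %% 2 = 0)%N by rewrite modn2 (negbTE hu).
  lia.
have h4w : 4 %| w by apply/dvdnP; exists (u %/ 2); lia.
have gw := IH w ltac:(lia) ltac:(lia) (introT orP (or_intror h4w)).
apply: (good_transport (good_prod good4 gw)).
by rewrite card_ord card_prod card_ord !card_prod card_bool.
Qed.

Theorem mainTheorem12 (v : nat) (hv : 4 <= v) (hmod : v %% 4 != 2)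
  (d : nat) (hd : 0 < d) (hdv : d + 1 <= v) :
  exists A : 'M['I_v]_((d + 1) * v ^ 2, 6), isOptimumCDA d 2 A.
Proof.
apply: cda_of_good => //.
apply: good_nat; first by lia.
case: (boolP (odd v)) => // hev /=.
have : (v %% 2 = 0)%N by rewrite modn2 (negbTE hev).
move=> h2; move: hmod => /eqP hmod; apply/dvdnP; exists (v %/ 4); lia.
Qed.
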